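(* Let $D$ be a tournament missing disjoint paths of length 2 and let $C=a_1b_1c_1,\dots,a_kb_kc_k$ be a double cycle in $\Delta(D)$. Then for all $i\in\{1,\dots,k\}$, with $H=D[K(C)]$: (1) $N^{++}_H(a_i)=N^{++}_H(c_i)$; (2) $N^{--}_H(a_i)=N^{--}_H(c_i)$.
   Context: All digraphs are finite oriented graphs; $D[X]$ is the induced subdigraph. $N^+_H(v)$, $N^-_H(v)$ are out/in-neighborhoods in $H$; $N^{++}_H(v)$ is the set of vertices $w\notin N_H^+(v)\cup\{v\}$ with $u\to w$ in $H$ for some $u\in N_H^+(v)$, and $N^{--}_H(v)$ is the set of vertices $w\notin N_H^-(v)\cup\{v\}$ with $w\to u$ in $H$ for some $u\in N_H^-(v)$. A missing edge is a pair of distinct non-adjacent vertices; the missing graph is formed by the missing edges. $D$ is a tournament missing disjoint paths of length 2 if its missing graph is a vertex-disjoint union of paths each with exactly two edges. For missing edges $\{x,y\},\{a,b\}$, $\{x,y\}$ loses to $\{a,b\}$ (written $xy\to ab$) if the endpoints can be labelled so that $x\to a$, $b\notin N^+(x)\cup N^{++}(x)$, $y\to b$, $a\notin N^+(y)\cup N^{++}(y)$ (neighborhoods in $D$). $\Delta(D)$ has the missing edges as vertices and arcs $(e,e')$ whenever $e$ loses to $e'$. For missing paths $abc$, $xyz$, $abc\to xyz$ means each of $ab,bc$ loses to each of $xy,yz$. A double cycle is a sequence $C=a_1b_1c_1,\dots,a_kb_kc_k$ ($k\ge2$) of distinct missing paths of length 2 (components of the missing graph, edges $a_ib_i,b_ic_i$)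 with $a_ib_ic_i\to a_{i+1}b_{i+1}c_{i+1}$ for all $i$, indices modulo $k$. $K(C)=\{a_i,b_i,c_i:1\le i\le k\}$. *)

(* Defs.v *)
From mathcomp Require Import all_boot.
Set Implicit Arguments. Unset Strict Implicit. Unset Printing Implicit Defensive.

Section Digraph.
Variable V : finType.
Variable arc : rel V.

Definition oriented := (forall x, ~~ arc x x) /\ (forall x y, arc x y -> ~~ arc y x).

Definition nonadj (x y : V) : bool := [&& x != y, ~~ arc x y & ~~ arc y x].

(* Neighbourhoods in the induced subdigraph H = D[X]. *)
Definition outN (X : {set V}) (v : V) : {set V} := [set w in X | arc v w].
Definition inN (X : {set V}) (v : V) : {set V} := [set w in X | arc w v].
Definition outN2 (X : {set V}) (v : V) : {set V} :=
  [set w in X | (w \notin outN X v) && (w != v) &&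
                [exists u, (u \in outN X v) && arc u w]].
Definition inN2 (X : {set V}) (v : V) : {set V} :=
  [set w in X | (w \notin inN X v) && (w != v) &&
                [exists u, (u \in inN X v) && arc w u]].

(* a b c is a component of the missing graph which is a path with exactly
   two edges ab, bc (b the middle vertex) *)
Definition missing_path (a b c : V) : Prop :=
  [/\ nonadj a b, nonadj b c, a != c,
      (forall z, nonadj a z -> z = b) /\ (forall z, nonadj c z -> z = b) &
      (forall z, nonadj b z -> z = a \/ z = c)].

Definition tournament_missing_P2 : Prop :=
  oriented /\
  forall x y, nonadj x y ->
    exists a b c, missing_path a b c /\
      ([set x; y] = [set a; b] \/ [set x; y] = [set b; c]).

Definition loses_lab (x y a b : V) : bool :=
  [&& arc x a, b \notin outN setT x :|: outN2 setT x,
      arc y b & a \notin outN setT y :|: outN2 setT y].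

Definition loses (x y a b : V) : bool :=
  [|| loses_lab x y a b, loses_lab y x a b, loses_lab x y b a
    | loses_lab y x b a].

Definition path_loses (a b c x y z : V) : bool :=
  [&& loses a b x y, loses a b y z, loses b c x y & loses b c y z].

Definition double_cycle (k : nat) (a b c : nat -> V) : Prop :=
  [/\ 2 <= k,
      (forall i, i < k -> missing_path (a i) (b i) (c i)),
      (forall i j, i < k -> j < k -> i != j ->
         [set a i; b i; c i] != [set a j; b j; c j]) &
      (forall i, i < k ->
         path_loses (a i) (b i) (c i)
                    (a (i.+1 %% k)) (b (i.+1 %% k)) (c (i.+1 %% k)))].

Definition KC (k : nat) (a b c : nat -> V) : {set V} :=
  [set v | [exists i : 'I_k, v \in [set a i; b i; c i]]].

End Digraph.

(* Main.v *)
Require Import Defs.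
From mathcomp Require Import all_boot.
Set Implicit Arguments. Unset Strict Implicit. Unset Printing Implicit Defensive.


Definition NR (V : finType) (arc : rel V) (x q : V) : Prop :=
  forall u, ~~ (arc x u && arc u q).

Lemma antis (V : finType) (arc : rel V) : oriented arc -> forall x y, arc x y -> arc y x -> False.
Proof. by case=> _ H x y /H/negP. Qed.

Lemma nonadjC (V : finType) (arc : rel V) x y : nonadj arc x y = nonadj arc y x.
Proof. by rewrite /nonadj eq_sym [~~ arc x y && _]andbC. Qed.

Lemma notN12 (V : finType) (arc : rel V) x q : x != q ->
  q \notin outN arc setT x :|: outN2 arc setT x -> ~~ arc x q /\ NR arc x q.
Proof.
move=> xq; rewrite !inE /= negb_or => /andP[nxq H]; split=>// u.
apply/negP => /andP[xu uq]; move: H; rewrite nxq (eq_sym q) xq /= => /negP; apply.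
by apply/existsP; exists u; rewrite uq andbT /outN inE in_setT.
Qed.

Lemma lab_ext (V : finType) (arc : rel V) x y p q : x != q -> y != p -> loses_lab arc x y p q ->
  [/\ arc x p, arc y q, ~~ arc x q /\ NR arc x q & ~~ arc y p /\ NR arc y p].
Proof.
move=> xq yp /and4P [xp Hq yq Hp]; split=> //; exact: notN12.
Qed.

Lemma lose2 (V : finType) (arc : rel V) x y p q :
  x != p -> x != q -> y != p -> y != q -> loses arc x y p q ->
  [/\ arc x p, arc y q, ~~ arc x q /\ NR arc x q & ~~ arc y p /\ NR arc y p] \/
  [/\ arc x q, arc y p, ~~ arc x p /\ NR arc x p & ~~ arc y q /\ NR arc y q].
Proof.
move=> xp xq yp yq; rewrite /loses; case/or4P => H.
- by left; apply: lab_ext H.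
- by case: (lab_ext yq xp H) => *; right; split.
- by case: (lab_ext xp yq H) => *; right; split.
- by case: (lab_ext yp xq H) => *; left; split.
Qed.

Lemma mp_in (V: finType) (a b c x : V) : x \in [set a; b; c] -> x = a \/ x = b \/ x = c.
Proof. by rewrite !inE => /orP[/orP[]|] /eqP; auto. Qed.

Lemma mp_out (V : finType) (arc : rel V) a b c x z : missing_path arc a b c ->
  x \in [set a; b; c] -> nonadj arc x z -> z \in [set a; b; c].
Proof.
case=> _ _ _ [Ha Hc] Hb /mp_in[->|[->|->]] H.
- by rewrite (Ha _ H) !inE eqxx orbT.
- by case: (Hb _ H) => ->; rewrite !inE eqxx ?orbT.
- by rewrite (Hc _ H) !inE eqxx orbT.
Qed.

Lemma mp_adj (V : finType) (arc : rel V) a b c y v : missing_path arc a b c ->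
  y \in [set a; b; c] -> v \notin [set a; b; c] -> arc v y || arc y v.
Proof.
move=> H yS vS; case: (boolP (arc v y || arc y v)) => // Hn; exfalso.
have : nonadj arc y v.
  rewrite /nonadj; move: Hn; rewrite negb_or => /andP[h1 h2]; rewrite h1 h2 !andbT.
  by apply/eqP => E; move: vS; rewrite -E yS.
by move/(mp_out H yS); rewrite (negbTE vS).
Qed.

Lemma mp_ac (V : finType) (arc : rel V) a b c : missing_path arc a b c -> ~~ nonadj arc a c.
Proof.
case=> _ Hbc _ [Ha _] _; apply/negP => /Ha E; move: Hbc; rewrite E /nonadj eqxx //.
Qed.

Lemma mp_comp (V : finType) (arc : rel V) a b c x : missing_path arc a b c ->
  x \in [set a; b; c] -> exists2 q, q \in [set a; b; c] & nonadj arc x q.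
Proof.
move=> H; case: (H) => Hab Hbc _ _ _ /mp_in[->|[->|->]].
- by exists b; rewrite ?inE ?eqxx ?orbT.
- by exists a; rewrite ?inE ?eqxx ?orbT // nonadjC.
- by exists b; rewrite ?inE ?eqxx ?orbT // nonadjC.
Qed.

Lemma mp_char (V : finType) (arc : rel V) a b c x : missing_path arc a b c ->
  x \in [set a; b; c] -> forall z, (z \in [set a; b; c]) =
   [|| z == x, nonadj arc x z | [exists w, nonadj arc x w && nonadj arc w z]].
Proof.
move=> H xS z; apply/idP/idP; last first.
  case/or3P => [/eqP -> //|/(mp_out H xS) //|/existsP [w /andP [h1 h2]]].
  exact: (mp_out H (mp_out H xS h1) h2).
case: (H) => Hab Hbc _ _ _.
move: xS => /mp_in[->|[->|->]] /mp_in[->|[->|->]]; rewrite ?eqxx ?Hab ?Hbc //.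
all: rewrite ?orbT //.
all: try by rewrite nonadjC ?Hab ?Hbc ?orbT.
all: apply/orP; right; apply/orP; right; apply/existsP; exists b.
  by rewrite Hab Hbc. by rewrite nonadjC Hbc nonadjC Hab.
Qed.

Lemma mp_same (V : finType) (arc : rel V) a b c a' b' c' x : missing_path arc a b c ->
  missing_path arc a' b' c' -> x \in [set a; b; c] -> x \in [set a'; b'; c'] ->
  [set a; b; c] = [set a'; b'; c'].
Proof.
move=> H H' xS xS'; apply/setP => z; by rewrite (mp_char H xS) (mp_char H' xS').
Qed.


Definition caseA (V : finType) (arc : rel V) a b c a' b' c' : Prop :=
 [/\ [/\ arc a' a, arc c' a, arc a' c, arc c' c & arc b' b],
     [/\ arc a b', arc c b', arc b a' & arc b c'] &
     [/\ NR arc a a', NR arc a c', NR arc c a', NR arc c c' & NR arc b b']].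
Definition caseB (V : finType) (arc : rel V) a b c a' b' c' : Prop :=
 [/\ [/\ arc b b', arc b' a, arc b' c, arc a a' & arc a c'],
     [/\ arc c a', arc c c', arc a' b & arc c' b] &
     [/\ NR arc a b', NR arc c b', NR arc b a' & NR arc b c']].

Lemma adj_or (V : finType) (arc : rel V) u v : ~~ arc v u -> arc u v || arc v u -> arc u v.
Proof. by move=> /negbTE ->; rewrite orbF. Qed.

Ltac contr := match goal with
 | H : is_true (~~ ?P), H' : is_true ?P |- _ => by rewrite H' in H
 end.
Ltac contr2 Hor := match goal with
 | H : is_true (?arc ?x ?y), H' : is_true (?arc ?y ?x) |- _ => exfalso; exact: (antis Hor H H')
 end.

Ltac arcs C1 C2 := match goal with
 | H : is_true (?arc ?u ?v) |- is_true (?arc ?u ?v) => exact H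
 | H : is_true (~~ ?arc ?v ?u) |- is_true (?arc ?u ?v) =>
     apply: (adj_or H);
     first [ (apply: C1; by rewrite !inE eqxx ?orbT) | (apply: C2; by rewrite !inE eqxx ?orbT) ]
end.

Lemma consec (V : finType) (arc : rel V) a b c a' b' c' : oriented arc ->
  missing_path arc a b c -> missing_path arc a' b' c' ->
  (forall z, z \in [set a; b; c] -> z \notin [set a'; b'; c']) ->
  path_loses arc a b c a' b' c' ->
  caseA arc a b c a' b' c' \/ caseB arc a b c a' b' c'.
Proof.
move=> Hor H H' Hd.
have C1 : forall u v, u \in [set a; b; c] -> v \in [set a'; b'; c'] -> arc u v || arc v u.
  by move=> u v uS vS; apply: (mp_adj H' vS); apply: Hd.
have C2 : forall u v, u \in [set a'; b'; c'] -> v \in [set a; b; c] -> arc u v || arc v u.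
  by move=> u v uS vS; rewrite orbC; apply: C1.
have D1 : forall u v, u \in [set a; b; c] -> v \in [set a'; b'; c'] -> u != v.
  by move=> u v uS vS; apply/eqP => E; move: (Hd _ uS); rewrite E vS.
have m1 : forall u, u \in [set u; b; c] by move=> u; rewrite !inE eqxx.
have m2 : forall u, u \in [set a; u; c] by move=> u; rewrite !inE eqxx orbT.
have m3 : forall u, u \in [set a; b; u] by move=> u; rewrite !inE eqxx orbT.
have n1 : forall u, u \in [set u; b'; c'] by move=> u; rewrite !inE eqxx.
have n2 : forall u, u \in [set a'; u; c'] by move=> u; rewrite !inE eqxx orbT.
have n3 : forall u, u \in [set a'; b'; u] by move=> u; rewrite !inE eqxx orbT.
case/and4P => L1 L2 L3 L4.
have E1 := lose2 (D1 _ _ (m1 a) (n1 a')) (D1 _ _ (m1 a) (n2 b'))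
                 (D1 _ _ (m2 b) (n1 a')) (D1 _ _ (m2 b) (n2 b')) L1.
have E2 := lose2 (D1 _ _ (m1 a) (n2 b')) (D1 _ _ (m1 a) (n3 c'))
                 (D1 _ _ (m2 b) (n2 b')) (D1 _ _ (m2 b) (n3 c')) L2.
have E3 := lose2 (D1 _ _ (m2 b) (n1 a')) (D1 _ _ (m2 b) (n2 b'))
                 (D1 _ _ (m3 c) (n1 a')) (D1 _ _ (m3 c) (n2 b')) L3.
have E4 := lose2 (D1 _ _ (m2 b) (n2 b')) (D1 _ _ (m2 b) (n3 c'))
                 (D1 _ _ (m3 c) (n2 b')) (D1 _ _ (m3 c) (n3 c')) L4.
have Hbb := C1 _ _ (m2 b) (n2 b').
case: E1 => [[? ? [? ?] [? ?]]|[? ? [? ?] [? ?]]];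
case: E2 => [[? ? [? ?] [? ?]]|[? ? [? ?] [? ?]]];
case: E3 => [[? ? [? ?] [? ?]]|[? ? [? ?] [? ?]]];
case: E4 => [[? ? [? ?] [? ?]]|[? ? [? ?] [? ?]]];
case/orP: Hbb => ?; try contr; try contr2 Hor.
all: first [ solve [left; split; split; first [assumption | arcs C1 C2]]
            | solve [right; split; split; first [assumption | arcs C1 C2]]].
Qed.

Record good (V : finType) (arc : rel V) (P Q : {set V}) : Prop := Good {
 gN : forall x y, x \in P -> y \in Q -> arc y x -> NR arc x y;
 gEF : forall x, x \in P -> exists2 y, y \in Q & arc y x;
 gEB : forall y, y \in Q -> exists2 x, x \in P & arc y x;
 g7 : forall x x' y, x \in P -> x' \in P -> nonadj arc x x' -> y \in Q -> arc x y -> arc y x';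
 g8 : forall x y y', x \in P -> y \in Q -> y' \in Q -> nonadj arc y y' -> arc x y -> arc y' x;
 g4 : forall y z x, y \in P -> z \in Q -> x \in Q -> x != z -> ~~ nonadj arc x z ->
        arc z y -> arc x y }.

Ltac fin Hor := first [ assumption | contr | contr2 Hor | by rewrite eqxx in *
  | (match goal with H : is_true (nonadj _ ?x ?x) |- _ => by rewrite /nonadj eqxx in H end) ].

Lemma good_of (V : finType) (arc : rel V) a b c a' b' c' : oriented arc ->
  missing_path arc a b c -> missing_path arc a' b' c' ->
  (forall z, z \in [set a; b; c] -> z \notin [set a'; b'; c']) ->
  path_loses arc a b c a' b' c' ->
  good arc [set a; b; c] [set a'; b'; c'].
Proof.
move=> Hor H H' Hd HL.
have nac := mp_ac H; have nac' := mp_ac H'.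
have nca : ~~ nonadj arc c a by rewrite nonadjC.
have nca' : ~~ nonadj arc c' a' by rewrite nonadjC.
case: (H) => ab bc _ _ _; case: (H') => ab' bc' _ _ _.
have ba : nonadj arc b a by rewrite nonadjC.
have cb : nonadj arc c b by rewrite nonadjC.
have ba' : nonadj arc b' a' by rewrite nonadjC.
have cb' : nonadj arc c' b' by rewrite nonadjC.
have m1 : forall u, u \in [set u; b'; c'] by move=> u; rewrite !inE eqxx.
have m2 : forall u, u \in [set a'; u; c'] by move=> u; rewrite !inE eqxx orbT.
have m3 : forall u, u \in [set a'; b'; u] by move=> u; rewrite !inE eqxx orbT.
have k1 : forall u, u \in [set u; b; c] by move=> u; rewrite !inE eqxx.
have k2 : forall u, u \in [set a; u; c] by move=> u; rewrite !inE eqxx orbT.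
have k3 : forall u, u \in [set a; b; u] by move=> u; rewrite !inE eqxx orbT.
case: (consec Hor H H' Hd HL) => [[[? ? ? ? ?] [? ? ? ?] [? ? ? ? ?]]|[[? ? ? ? ?] [? ? ? ?] [? ? ? ?]]];
constructor.
all: try (move=> x y /mp_in[->|[->|->]] /mp_in[->|[->|->]] ?; fin Hor).
all: try (move=> x /mp_in[->|[->|->]];
   first [ (exists a'; [exact: m1 | fin Hor]) | (exists b'; [exact: m2 | fin Hor])
         | (exists c'; [exact: m3 | fin Hor]) ]).
all: try (move=> x /mp_in[->|[->|->]];
   first [ (exists a; [exact: k1 | fin Hor]) | (exists b; [exact: k2 | fin Hor])
         | (exists c; [exact: k3 | fin Hor]) ]).
all: try (move=> x y z /mp_in[->|[->|->]] /mp_in[->|[->|->]] ? /mp_in[->|[->|->]] ?; fin Hor).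
all: try (move=> x y z /mp_in[->|[->|->]] /mp_in[->|[->|->]] /mp_in[->|[->|->]] ? ?; fin Hor).
all: try (move=> x y z /mp_in[->|[->|->]] /mp_in[->|[->|->]] /mp_in[->|[->|->]] ? ? ?; fin Hor).
Qed.


Record env (V : finType) (arc : rel V) (k : nat) (Q : nat -> {set V}) (s : nat -> nat) : Prop :=
 Env {
  eor : oriented arc;
  ek : 0 < k;
  es : forall t, s t = t.+1 %% k;
  eg : forall t, t < k -> good arc (Q t) (Q (s t));
  eadj : forall t v y, t < k -> y \in Q t -> v \notin Q t -> arc v y || arc y v;
  edisj : forall t t' x, t < k -> t' < k -> t != t' -> x \in Q t -> x \notin Q t';
  ecomp : forall t v, t < k -> v \in Q t -> exists2 q, q \in Q t & nonadj arc v q }.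

Definition step (V : finType) (arc : rel V) (Q : nat -> {set V}) (s : nat -> nat) t x y :=
  [/\ x \in Q t, y \in Q (s t) & arc y x].

Fixpoint chain (V : finType) (arc : rel V) (Q : nat -> {set V}) (s : nat -> nat) n t x z : Prop :=
  match n with
  | 0 => x = z /\ x \in Q t
  | n'.+1 => exists y, step arc Q s t x y /\ chain arc Q s n' (s t) y z
  end.


Lemma iter_mod (V : finType) (arc : rel V) k Q s (E : env arc k Q s) t n :
  t < k -> iter n s t = (t + n) %% k.
Proof.
move=> tk; elim: n => [|n IH]; first by rewrite addn0 modn_small.
by rewrite iterS IH (es E) -addn1 modnDml addn1 addnS.
Qed.

Lemma iter_lt (V : finType) (arc : rel V) k Q s (E : env arc k Q s) t n :
  t < k -> iter n s t < k.
Proof. by move=> tk; rewrite (iter_mod E) // ltn_pmod // (ek E). Qed.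

Lemma s_lt (V : finType) (arc : rel V) k Q s (E : env arc k Q s) t : t < k -> s t < k.
Proof. by move=> tk; apply: (iter_lt E 1 tk). Qed.

Lemma iter_inj (V : finType) (arc : rel V) k Q s (E : env arc k Q s) t m n :
  t < k -> m < k -> n < k -> iter m s t = iter n s t -> m = n.
Proof.
move=> tk mk nk; rewrite !(iter_mod E) // => /eqP; rewrite eqn_modDl.
by rewrite !modn_small // => /eqP.
Qed.

Lemma iter_k (V : finType) (arc : rel V) k Q s (E : env arc k Q s) t :
  t < k -> iter k s t = t.
Proof. by move=> tk; rewrite (iter_mod E) // modnDr modn_small. Qed.

Lemma chain_end (V : finType) (arc : rel V) Q s n t x z :
  chain arc Q s n t x z -> x \in Q t /\ z \in Q (iter n s t).
Proof.
elim: n t x => [|n IH] t x /=; first by case=> ->.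
by case=> y [[xQ _ _] /IH [_]]; rewrite -iterSr.
Qed.

Lemma chain_cat (V : finType) (arc : rel V) Q s m n t x y z :
  chain arc Q s m t x y -> chain arc Q s n (iter m s t) y z -> chain arc Q s (m + n) t x z.
Proof.
elim: m t x => [|m IH] t x /=; first by case=> ->.
case=> y0 [st ch] ch2; exists y0; split=> //; apply: IH ch _.
by rewrite -iterSr.
Qed.

Lemma chain_fwd (V : finType) (arc : rel V) k Q s (E : env arc k Q s) n t x :
  t < k -> x \in Q t -> exists z, chain arc Q s n t x z.
Proof.
elim: n t x => [|n IH] t x tk xQ; first by exists x.
case: (gEF (eg E tk) xQ) => y yQ yx.
case: (IH (s t) y (s_lt E tk) yQ) => z ch.
by exists z, y.
Qed.

Lemma chain_bwd (V : finType) (arc : rel V) k Q s (E : env arc k Q s) n t z :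
  t < k -> z \in Q (iter n s t) -> exists x, chain arc Q s n t x z.
Proof.
elim: n t => [|n IH] t tk zQ; first by exists z.
rewrite iterSr in zQ.
case: (IH (s t) (s_lt E tk) zQ) => y ch.
have [yQ _] := chain_end ch.
case: (gEB (eg E tk) yQ) => x xQ yx.
by exists x, y.
Qed.

Lemma stepL (V : finType) (arc : rel V) k Q s (E : env arc k Q s) t y z v :
  t < k -> step arc Q s t y z -> arc y v -> v \notin Q (s t) -> arc z v.
Proof.
move=> tk [yQ zQ zy] yv vQ.
have := gN (eg E tk) yQ zQ zy v; rewrite yv /= => /negbTE nvz.
by move: (eadj E (s_lt E tk) zQ vQ); rewrite nvz.
Qed.

Lemma stepL' (V : finType) (arc : rel V) k Q s (E : env arc k Q s) t x y v :
  t < k -> step arc Q s t x y -> arc v y -> v \notin Q t -> arc v x.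
Proof.
move=> tk [xQ yQ yx] vy vQ.
have := gN (eg E tk) xQ yQ yx v; rewrite vy andbT => /negbTE nxv.
by move: (eadj E tk xQ vQ); rewrite nxv orbF.
Qed.

Lemma chainL (V : finType) (arc : rel V) k Q s (E : env arc k Q s) n t x z v :
  t < k -> chain arc Q s n t x z -> arc x v ->
  (forall m, 0 < m <= n -> v \notin Q (iter m s t)) -> arc z v.
Proof.
elim: n t x => [|n IH] t x tk /=; first by case=> ->.
case=> y [st ch] xv Hm.
have yv : arc y v by apply: (stepL E tk st xv); exact: (Hm 1).
apply: (IH (s t) y (s_lt E tk) ch yv) => m /andP [m0 mn].
by rewrite -iterSr; apply: Hm; apply/andP; split.
Qed.

Lemma chainL' (V : finType) (arc : rel V) k Q s (E : env arc k Q s) n t x z v :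
  t < k -> chain arc Q s n t x z -> arc v z ->
  (forall m, m < n -> v \notin Q (iter m s t)) -> arc v x.
Proof.
elim: n t x => [|n IH] t x tk /=; first by case=> ->.
case=> y [st ch] vz Hm.
have vy : arc v y.
  apply: (IH (s t) y (s_lt E tk) ch vz) => m mn.
  by rewrite -iterSr; apply: Hm.
by apply: (stepL' E tk st vy); exact: (Hm 0).
Qed.

Lemma chainPen (V : finType) (arc : rel V) k Q s (E : env arc k Q s) n t x z v :
  t < k -> chain arc Q s n.+1 t x z -> arc x v ->
  (forall m, 0 < m <= n -> v \notin Q (iter m s t)) ->
  exists y, arc y v /\ step arc Q s (iter n s t) y z.
Proof.
elim: n t x => [|n IH] t x tk /=.
  by case=> y [st [<- _]] xv _; exists x.
case=> y [st ch] xv Hm.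
have yv : arc y v by apply: (stepL E tk st xv); exact: (Hm 1).
have [y' [y'v st']] : exists y', arc y' v /\ step arc Q s (iter n s (s t)) y' z.
  apply: (IH (s t) y (s_lt E tk) ch yv) => m /andP [m0 mn].
  by rewrite -iterSr; apply: Hm; apply/andP; split.
by exists y'; rewrite -?iterS iterSr.
Qed.


Lemma closed (V : finType) (arc : rel V) k Q s (E : env arc k Q s) n t x z :
  t < k -> k = n.+2 -> chain arc Q s k t x z -> nonadj arc x z.
Proof.
move=> tk kn; rewrite {1}kn /= => -[y1 [st ch]].
have [xQ _ y1x] := st.
have Hm : forall m, 0 < m <= n -> x \notin Q (iter m s (s t)).
  move=> m /andP[m0 mn]; rewrite -iterSr.
  apply: (edisj E tk (iter_lt E _ tk) _ xQ); apply/eqP => Et.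
  have := iter_inj E (m := m.+1) (n := 0) tk; rewrite -Et /= => H.
  have : m.+1 = 0.
    by apply: H; rewrite ?kn //; exact: mn.
  by [].
have [y [yx [yQ zQ zy]]] := chainPen E (s_lt E tk) ch y1x Hm.
have Ht : s (iter n s (s t)) = t by rewrite -iterS -iterSr -kn (iter_k E tk).
have xQ' : x \in Q (s (iter n s (s t))) by rewrite Ht.
have xy : ~~ arc x y.
  apply/negP => h. have := antis (eor E) h. move=> H; exact: H yx.
case: (eqVneq x z) => [xz|xz]; first by subst; rewrite zy in xy.
case: (boolP (nonadj arc x z)) => // nxz.
have tk' : iter n s (s t) < k by apply: (iter_lt E); apply: (s_lt E).
by rewrite (g4 (eg E tk') yQ zQ xQ' xz nxz zy) in xy.
Qed.

Lemma twin (V : finType) (arc : rel V) k Q s (E : env arc k Q s) i j x z v :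
  i < k -> j < k -> i != j -> 2 <= k -> x \in Q i -> z \in Q i -> x != z ->
  ~~ nonadj arc x z -> v \in Q j -> arc x v -> arc v z -> False.
Proof.
move=> ik jk ij k2 xQ zQ xz nxz vQ xv vz.
have Hd : iter ((j + k - i) %% k) s i = j.
  rewrite (iter_mod E) // modnDmr addnC subnK ?modnDr ?modn_small //.
  by apply: leq_trans (ltnW ik) (leq_addl j k).
have dk : (j + k - i) %% k < k by apply: ltn_pmod; exact: (ek E).
move: Hd dk; case: ((j + k - i) %% k) => [|d'] Hd dk.
  by move: ij; rewrite -Hd eqxx.
have [xm ch1] := chain_fwd E d' ik xQ.
have [_ xmQ] := chain_end ch1.
have xmv : arc xm v.
  apply: (chainL E ik ch1 xv) => m /andP[m0 md].
  apply: (edisj E jk (iter_lt E m ik) _ vQ); rewrite -Hd; apply/eqP.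
  move/(iter_inj E ik dk) => H.
  have : d'.+1 = m by apply: H; apply: leq_ltn_trans md (ltnW dk).
  by move=> Em; move: md; rewrite -Em ltnn.
set t1 := iter d' s i.
have t1k : t1 < k by apply: (iter_lt E).
have st1 : s t1 = j by rewrite /t1 -iterS.
have [q qQ vq] := ecomp E jk vQ.
have qxm : arc q xm.
  by apply: (g8 (eg E t1k) xmQ _ _ vq xmv); rewrite st1.
have ch2 : chain arc Q s d'.+1 i x q.
  rewrite -addn1; apply: (chain_cat ch1); exists q; split; last by split=> //; rewrite st1.
  by split=> //; rewrite st1.
set e := k - d'.+2.
have ke : d'.+1 + e.+1 = k by rewrite /e addnS -addSn subnKC.
clearbody e.
have sjk : s j < k by apply: (s_lt E).
have zQ' : z \in Q (iter e s (s j)).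
  by rewrite -iterSr -Hd -iterD addnC ke (iter_k E ik).
have [y ch3] := chain_bwd E sjk zQ'.
have [yQ _] := chain_end ch3.
have vy : arc v y.
  apply: (chainL' E sjk ch3 vz) => m me.
  apply: (edisj E jk (iter_lt E m sjk) _ vQ).
  rewrite -iterSr -Hd -iterD; apply/eqP.
  move/(iter_inj E ik dk) => H.
  have : d'.+1 = m.+1 + d'.+1 by apply: H; rewrite -ke [X in _ < X]addnC ltn_add2r ltnS.
  by rewrite -{1}(add0n d'.+1) => /eqP; rewrite eqn_add2r.
have yq : arc y q := g7 (eg E jk) vQ qQ vq yQ vy.
have ch4 : chain arc Q s e.+1 (iter d'.+1 s i) q z.
  by rewrite Hd; exists y; split.
have ch5 := chain_cat ch2 ch4.
rewrite ke in ch5.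
have k2' : k = (k - 2).+2 by rewrite -addn2 subnK.
by have := closed E ik k2' ch5; rewrite (negbTE nxz).
Qed.


Lemma outN2_sub (V : finType) (arc : rel V) (X : {set V}) a c : oriented arc ->
  (forall v, v \in X -> v != a -> v != c -> arc a v = arc c v) ->
  outN2 arc X a \subset outN2 arc X c.
Proof.
move=> Hor Ht; apply/subsetP => w; rewrite !inE.
case/and3P => wX /andP[nw wa] /existsP[u /andP[uN uw]].
move: nw uN; rewrite /outN !inE wX /= => naw /andP[uX au].
have ua : u != a by apply/eqP => E; subst u; case: Hor => H _; by rewrite (negbTE (H a)) in au.
have wc : w != c.
  apply/eqP => E; subst w.
  case: (eqVneq u c) => [E|uc]; first by subst u; rewrite au in naw.
  have cu : arc c u by rewrite -(Ht u uX ua uc).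
  exact: (antis Hor cu uw).
have ncw : ~~ arc c w by rewrite -(Ht w wX wa wc).
have uc : u != c by apply/eqP => E; subst u; rewrite uw in ncw.
rewrite ncw wc /=; apply/existsP; exists u; rewrite inE uX uw andbT /=.
by rewrite -(Ht u uX ua uc).
Qed.

Lemma flip_or (V : finType) (arc : rel V) : oriented arc -> oriented (fun x y => arc y x).
Proof. by case=> H1 H2; split=> // x y; apply: H2. Qed.

Lemma inN2_flip (V : finType) (arc : rel V) X v :
  inN2 arc X v = outN2 (fun x y => arc y x) X v.
Proof. by []. Qed.

Lemma N2_eq (V : finType) (arc : rel V) (X : {set V}) a c : oriented arc ->
  (forall v, v \in X -> v != a -> v != c -> arc a v = arc c v /\ arc v a = arc v c) ->
  outN2 arc X a = outN2 arc X c /\ inN2 arc X a = inN2 arc X c.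
Proof.
move=> Hor Ht; split; apply/eqP; rewrite eqEsubset; apply/andP; split.
- by apply: outN2_sub => // v vX va vc; case: (Ht v vX va vc).
- by apply: outN2_sub => // v vX vc va; case: (Ht v vX va vc).
- rewrite !inN2_flip; apply: outN2_sub; first exact: flip_or.
  by move=> v vX va vc; case: (Ht v vX va vc).
- rewrite !inN2_flip; apply: outN2_sub; first exact: flip_or.
  by move=> v vX vc va; case: (Ht v vX va vc).
Qed.


Lemma adj_in (V : finType) (arc : rel V) x y : x != y -> ~~ nonadj arc x y -> arc x y || arc y x.
Proof.
by move=> xy; rewrite /nonadj xy /= negb_and !negbK.
Qed.

Theorem lemma4p9 (V : finType) (arc : rel V) (k : nat) (a b c : nat -> V) :
  tournament_missing_P2 arc ->
  double_cycle arc k a b c ->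
  forall i, i < k ->
    outN2 arc (KC k a b c) (a i) = outN2 arc (KC k a b c) (c i) /\
    inN2 arc (KC k a b c) (a i) = inN2 arc (KC k a b c) (c i).
Proof.
case=> Hor _ [k2 Hmp Hdist Hloss] i ik.
pose Q t := [set a t; b t; c t].
pose s t := t.+1 %% k.
have k0 : 0 < k by apply: leq_trans k2.
have slt : forall t, s t < k by move=> t; rewrite /s ltn_pmod.
have edisj : forall t t' x, t < k -> t' < k -> t != t' -> x \in Q t -> x \notin Q t'.
  move=> t t' x tk t'k tt' xt; apply/negP => xt'.
  by move: (Hdist t t' tk t'k tt'); rewrite (mp_same (Hmp t tk) (Hmp t' t'k) xt xt') eqxx.
have sneq : forall t, t < k -> t != s t.
  move=> t tk; rewrite /s; case: (ltngtP t.+1 k) => [h|h|h].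
  - by rewrite modn_small // neq_ltn ltnSn.
  - by move: h; rewrite ltnS leqNgt tk.
  - rewrite h modnn; apply/eqP => t0; move: h k2; rewrite t0 => <-; by [].
have E : env arc k Q s.
  constructor=> //.
  - move=> t tk; apply: good_of => //; [exact: Hmp | exact: Hmp | | exact: Hloss].
    by move=> z zt; apply: (edisj t) => //; apply: sneq.
  - by move=> t v y tk yt vt; apply: (mp_adj (Hmp t tk) yt vt).
  - by move=> t v tk vt; apply: (mp_comp (Hmp t tk) vt).
have [ab bc ac _ _] := Hmp i ik.
have nac := mp_ac (Hmp i ik).
have nca : ~~ nonadj arc (c i) (a i) by rewrite nonadjC.
have aQ : a i \in Q i by rewrite !inE eqxx.
have cQ : c i \in Q i by rewrite !inE eqxx orbT.
have ca : c i != a i by rewrite eq_sym.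
apply: N2_eq => // v vX va vc.
move: vX; rewrite /KC inE => /existsP [t vt].
have tk := ltn_ord t.
case: (eqVneq (val t) i) => [ti|ti].
  move: vt; rewrite ti !inE (negbTE va) (negbTE vc) orbF /= => /eqP ->.
  move: ab bc; rewrite /nonadj => /and3P [_ h1 h2] /and3P [_ h3 h4].
  by rewrite (negbTE h1) (negbTE h2) (negbTE h3) (negbTE h4).
have it : i != val t by rewrite eq_sym.
have vnQ : v \notin Q i by apply: (edisj (val t)) => //.
have adja := mp_adj (Hmp i ik) aQ vnQ.
have adjc := mp_adj (Hmp i ik) cQ vnQ.
have tw := twin E ik tk it k2.
split; apply/idP/idP => h.
- case/orP: adjc => // h'; exfalso; exact: (tw _ _ _ aQ cQ ac nac vt h h').
- case/orP: adja => // h'; exfalso; exact: (tw _ _ _ cQ aQ ca nca vt h h').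
- case/orP: adjc => // h'; exfalso; exact: (tw _ _ _ cQ aQ ca nca vt h' h).
- case/orP: adja => // h'; exfalso; exact: (tw _ _ _ aQ cQ ac nac vt h' h).
Qed.
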